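(* Let $\widehat{T}(n)=\max_{w\in\mathcal{W}_n}\mathbb{E}(T\mid w_0=w)$ denote the worst expected convergence time of the cooling process on configurations of length $n$. Then $\widehat{T}(n)=O(n^3)$.
   Context: A configuration of length $n$ is a word $w=w_1\cdots w_n$ over the alphabet $\{1,2\}$ with $|w|_1=|w|_2$ (as many letters $1$ as letters $2$); $\mathcal{W}_n$ denotes the set of configurations of length $n$. A flip at position $1\le i<n$ on $w$ exchanges $w_i$ and $w_{i+1}$, provided $w_i\ne w_{i+1}$. The configuration $w$ has a mismatch at position $i$ if $w_i=w_{i+1}$; $E(w)$ denotes the total number of mismatches of $w$. The cooling process is the Markov chain $(w_t)_{t\ge0}$ on $\mathcal{W}_n$ started at $w_0$ and defined by $w_{t+1}=w_t$ if $E(w_t)=0$, and otherwise $w_{t+1}$ is obtained from $w_t$ by performing a flip chosen uniformly at random among the flips on $w_t$ that do not increase the number of mismatches (i.e. flips producing $w'$ with $E(w')\le E(w_t)$). The convergence time is $T=\min\{t\ge0 : E(w_t)=0\}$. *)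

(* Defs.v *)
From HB Require Import structures.
From mathcomp Require Import all_boot all_order all_algebra.
From mathcomp Require Import all_classical all_reals all_analysis.
Set Implicit Arguments. Unset Strict Implicit. Unset Printing Implicit Defensive.
Import Order.TTheory GRing.Theory Num.Theory.

(* A word over {1,2} is a seq bool: true encodes letter 1, false letter 2.
   Positions are 0-based: position i of the paper is index i-1 here. *)

Definition config (n : nat) (w : seq bool) : bool :=
  (size w == n) && (count id w == count negb w).

Definition mism (w : seq bool) : nat :=
  count (fun i => nth false w i == nth false w i.+1) (iota 0 (size w).-1).

Definition flip (w : seq bool) (i : nat) : seq bool :=
  set_nth false (set_nth false w i (nth false w i.+1)) i.+1 (nth false w i).

Definition allowed (w : seq bool) (i : nat) : bool :=
  (nth false w i != nth false w i.+1) && (mism (flip w i) <= mism w).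

(* surv t w = P(T > t | w_0 = w) for the cooling process, defined by the
   first-step (Markov) decomposition: T > t+1 iff E(w_0) > 0 (so w_1 is a
   uniformly random allowed flip of w_0) and, from w_1, T > t. *)
Fixpoint surv (R : realType) (t : nat) (w : seq bool) : R :=
  match t with
  | 0 => if (0 < mism w)%N then 1 else 0
  | t'.+1 =>
      if (0 < mism w)%N then
        (\sum_(i < (size w).-1 | allowed w i) surv R t' (flip w i))
          / (#|[pred i : 'I_(size w).-1 | allowed w i]|%:R)
      else 0
  end%R.

(* E(T | w_0 = w) = sum_{t >= 0} P(T > t | w_0 = w), in the extended reals
   (it is +oo if T is infinite with positive probability). *)
Definition expT (R : realType) (w : seq bool) : \bar R :=
  (\sum_(0 <= t <oo) ((surv R t w)%:E))%E.

(* Main.v *)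
Require Import Defs.
From HB Require Import structures.
From mathcomp Require Import all_boot all_order all_algebra.
From mathcomp Require Import all_classical all_reals all_analysis.
From mathcomp Require Import zify ring lra.
Import Order.TTheory GRing.Theory Num.Theory.
Set Implicit Arguments. Unset Strict Implicit. Unset Printing Implicit Defensive.

Section Comb.
Local Open Scope ring_scope.

Definition bz (b : bool) : int := if b then 1 else 0.
Definition vb (b : bool) : int := if b then 1 else -1.
Definition wallb (w : seq bool) (t : nat) : bool := nth false w t == nth false w t.+1.
Definition hh (w : seq bool) (k : nat) : int := \sum_(l < k) vb (nth false w l).
Definition Hs (w : seq bool) : int := \sum_(k < (size w).+1) `|hh w k|.
Definition q4 (m t : nat) : int := (t * (m.-1 - t))%:Z.
Definition WS (w : seq bool) (f : nat -> int) : int :=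
  \sum_(t < (size w).-1) bz (wallb w t) * f t.
Definition Qs (w : seq bool) : int := WS w (q4 (size w).-1).
Definition Phi4 (w : seq bool) : int :=
  let m := (size w).-1 in
  4 * (m * (m + 2))%:Z * (mism w)%:Z + m%:Z * Hs w + Qs w.

Lemma sum_delta (F G : nat -> int) (j N : nat) (x : int) :
  (forall k, F k = G k + (if k == j then x else 0)) ->
  \sum_(k < N) F k = \sum_(k < N) G k + (if (j < N)%N then x else 0).
Proof.
move=> FG; elim: N => [|N IH]; first by rewrite !big_ord0 ltn0 addr0.
rewrite !big_ord_recr /= IH FG.
case: (ltngtP j N) => h.
- by rewrite (ltn_trans h (ltnSn _)); ring.
- by rewrite ltnS leqNgt h; ring.
- by rewrite h ltnSn; ring.
Qed.

Lemma nth_flip w i k : nth false (flip w i) k =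
  if k == i.+1 then nth false w i else if k == i then nth false w i.+1 else nth false w k.
Proof. by rewrite /flip !nth_set_nth /= nth_set_nth. Qed.

Lemma size_flip w i : (i.+1 < size w)%N -> size (flip w i) = size w.
Proof.
move=> h; rewrite /flip !size_set_nth.
by rewrite !(maxn_idPr _) // ?size_set_nth ?(maxn_idPr _) // ltnW.
Qed.

Lemma mismE w : (mism w)%:Z = WS w (fun _ => 1).
Proof.
rewrite /mism /WS.
have -> : count (fun i => nth false w i == nth false w i.+1) (iota 0 (size w).-1)
  = (\sum_(t < (size w).-1) (wallb w t : nat))%N.
  rewrite -sum1_count big_mkcond /=.
  rewrite -(big_mkord xpredT (fun t => if wallb w t then 1%N else 0%N)) /index_iota subn0.
  by apply: eq_bigr => i _; rewrite /wallb; case: (_ == _).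
rewrite -natz natr_sum; apply: eq_bigr => i _ /=; rewrite /bz; case: (wallb w i) => //.
Qed.

Lemma wallb_flip w i t : nth false w i != nth false w i.+1 ->
  wallb (flip w i) t = if (t == i.+1) || (t.+1 == i) then ~~ wallb w t else wallb w t.
Proof.
move=> hd; rewrite /wallb !nth_flip.
case: (eqVneq t i.+1) => [->|h1].
  rewrite (_ : (i.+2 == i.+1) = false); last by lia.
  rewrite (_ : (i.+2 == i) = false); last by lia.
  rewrite ?eqxx /=.
  by move: hd; case: (nth false w i); case: (nth false w i.+1); case: (nth false w i.+2).
case: (eqVneq t.+1 i) hd => [<-|h2] hd.
  rewrite (_ : (t == t.+1) = false); last by lia.
  rewrite (_ : (t.+1 == t.+2) = false); last by lia.
  rewrite ?eqxx /= ?orbT.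
  by move: hd; case: (nth false w t); case: (nth false w t.+1); case: (nth false w t.+2).
rewrite /=.
case: (eqVneq t i) => [->|h3].
  rewrite eqxx /=.
  by move: hd; case: (nth false w i); case: (nth false w i.+1).
by rewrite eqSS (negbTE h3).
Qed.

Lemma WS_flip w i f : (i.+1 < size w)%N -> nth false w i != nth false w i.+1 ->
  WS (flip w i) f = WS w f
    + (if (0 < i)%N then (1 - 2 * bz (wallb w i.-1)) * f i.-1 else 0)
    + (if (i.+2 < size w)%N then (1 - 2 * bz (wallb w i.+1)) * f i.+1 else 0).
Proof.
move=> hs hd; rewrite /WS size_flip //.
pose G1 k := bz (wallb w k) * f k
   + (if k == i.-1 then (if (0 < i)%N then (1 - 2 * bz (wallb w i.-1)) * f i.-1 else 0) else 0).
rewrite (@sum_delta (fun k => bz (wallb (flip w i) k) * f k) G1 i.+1 _ ((1 - 2 * bz (wallb w i.+1)) * f i.+1)); last first.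
  move=> k; rewrite wallb_flip // /G1.
  case: (eqVneq k i.+1) => [->|h1] /=.
    have -> : (i.+1 == i.-1) = false by lia.
    by rewrite /bz; case: (wallb w i.+1) => /=; ring.
  case: (eqVneq k.+1 i) => [<-|h2] /=.
    rewrite eqxx /= /bz; case: (wallb w k) => /=; ring.
  case: (eqVneq k i.-1) => [h3|h3]; last by ring.
  have -> : (0 < i)%N = false by lia.
  by ring.
rewrite /G1 big_split /= (@sum_delta (fun k => if k == i.-1 then _ else 0) (fun _ => 0) i.-1 _ (if (0 < i)%N then (1 - 2 * bz (wallb w i.-1)) * f i.-1 else 0)); last by move=> k; rewrite add0r.
rewrite big1_eq add0r.
have -> : (i.+1 < (size w).-1)%N = (i.+2 < size w)%N by lia.
case: (ltnP 0 i) => h0; last by rewrite !if_same.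
have -> : (i.-1 < (size w).-1)%N by lia.
by [].
Qed.

Lemma hh_flip w i k :
  hh (flip w i) k = hh w k + (if k == i.+1 then vb (nth false w i.+1) - vb (nth false w i) else 0).
Proof.
rewrite /hh.
pose d := vb (nth false w i.+1) - vb (nth false w i).
pose G1 k := vb (nth false w k) + (if k == i then d else 0).
rewrite (@sum_delta (fun l => vb (nth false (flip w i) l)) G1 i.+1 k (- d)); last first.
  move=> l; rewrite nth_flip /G1.
  case: (eqVneq l i.+1) => [->|h1].
    have -> : (i.+1 == i) = false by lia.
    rewrite /d; ring.
  case: (eqVneq l i) => [->|h2]; rewrite /d; ring.
rewrite /G1 big_split /= (@sum_delta (fun l => if l == i then d else 0) (fun _ => 0) i k d); last by move=> l; rewrite add0r.
rewrite big1_eq add0r.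
by case: (ltngtP k i.+1) => h; rewrite /d; ring.
Qed.

Lemma Hs_flip w i : (i.+1 < size w)%N ->
  Hs (flip w i) = Hs w + `|hh w i.+1 + (vb (nth false w i.+1) - vb (nth false w i))| - `|hh w i.+1|.
Proof.
move=> hs; rewrite /Hs size_flip //.
rewrite (@sum_delta (fun k => `|hh (flip w i) k|) (fun k => `|hh w k|) i.+1 _ (`|hh w i.+1 + (vb (nth false w i.+1) - vb (nth false w i))| - `|hh w i.+1|)).
  have -> : (i.+1 < (size w).+1)%N by lia.
  by ring.
move=> k; rewrite hh_flip; case: (eqVneq k i.+1) => [->|h] /=; [ring | by rewrite !addr0].
Qed.

Definition sL w i : int := if (0 < i)%N then 1 - 2 * bz (wallb w i.-1) else 0.
Definition sR w i : int := if (i.+2 < size w)%N then 1 - 2 * bz (wallb w i.+1) else 0.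
Definition dH w i : int :=
  `|hh w i.+1 + (vb (nth false w i.+1) - vb (nth false w i))| - `|hh w i.+1|.

Lemma mism_flip w i : (i.+1 < size w)%N -> nth false w i != nth false w i.+1 ->
  (mism (flip w i))%:Z = (mism w)%:Z + sL w i + sR w i.
Proof.
move=> hs hd; rewrite !mismE WS_flip // /sL /sR.
by case: ifP => _; case: ifP => _; ring.
Qed.

Lemma Phi4_flip w i : (i.+1 < size w)%N -> nth false w i != nth false w i.+1 ->
  let m := (size w).-1 in
  Phi4 (flip w i) = Phi4 w + 4 * (m * (m + 2))%:Z * (sL w i + sR w i)
     + m%:Z * dH w i + (sL w i * q4 m i.-1 + sR w i * q4 m i.+1).
Proof.
move=> hs hd m; rewrite /Phi4 mism_flip // Hs_flip // /Qs WS_flip // size_flip // /dH /sL /sR -/m.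
by case: ifP => _; case: ifP => _; ring.
Qed.

Lemma hhS w k : hh w k.+1 = hh w k + vb (nth false w k).
Proof. by rewrite /hh big_ord_recr. Qed.

Lemma hh0 w : hh w 0 = 0.
Proof. by rewrite /hh big_ord0. Qed.

Lemma dH_le2 w i : nth false w i != nth false w i.+1 -> dH w i <= 2.
Proof.
rewrite /dH; case: (nth false w i); case: (nth false w i.+1) => //= _; rewrite /vb; lia.
Qed.

Lemma flip_bound w i : (i.+1 < size w)%N -> allowed w i ->
  let m := (size w).-1 in
  sL w i + sR w i <= 0 /\
  Phi4 (flip w i) - Phi4 w + 4 <= 4 * (m * (m + 2))%:Z * (sL w i + sR w i) + 4 * m%:Z + 4.
Proof.
move=> hs /andP[hd hle] m.
have hE : sL w i + sR w i <= 0.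
  have := mism_flip hs hd; move: hle; lia.
split=> //.
rewrite Phi4_flip //= -/m.
have h2 := dH_le2 hd.
suff hQ : sL w i * q4 m i.-1 + sR w i * q4 m i.+1 <= 2 * m%:Z.
  have : m%:Z * dH w i <= 2 * m%:Z by nia.
  lia.
move: hE; rewrite /sL /sR /q4 /m.
case: ifP => h0; case: ifP => h1; rewrite /bz;
  case: (wallb w i.-1); case: (wallb w i.+1); nia.
Qed.

Definition Gt w t : int := `|hh w t + 2 * vb (nth false w t)| - `|hh w t|.
Definition Ht w t : int :=
  let m := (size w).-1 in m%:Z * Gt w t + 4 * t%:Z - 2 * m%:Z + 2.

Lemma case2_flip w i : (0 < i)%N -> (i.+2 < size w)%N ->
  (allowed w i -> sL w i + sR w i = 0) ->
  bz (allowed w i) * (Phi4 (flip w i) - Phi4 w + 4) =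
  bz (~~ wallb w i && wallb w i.+1) * Ht w i.+1
  - bz (~~ wallb w i && wallb w i.-1) * Ht w i.-1.
Proof.
move=> h0 hs hnd.
case: (eqVneq (nth false w i) (nth false w i.+1)) => hd.
  have -> : allowed w i = false by rewrite /allowed hd eqxx.
  by rewrite /wallb hd eqxx /= /bz; ring.
have hs1 : (i.+1 < size w)%N by lia.
have hA : allowed w i = (sL w i + sR w i <= 0).
  rewrite /allowed hd /=; have := mism_flip hs1 hd.
  by case: leqP; case: lerP => //; lia.
move: hnd; rewrite hA Phi4_flip // /Ht /Gt /dH /sL /sR /q4 /wallb h0 hs /=.
case: i h0 hs hs1 hd hA => [//|j] _ hs hs1 hd _ /=.
rewrite !hhS.
move: (hh w j) => x.
move: (size w) hs hs1 => n hs hs1.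
move: hd; case: (nth false w j); case: (nth false w j.+1); case: (nth false w j.+2);
  case: (nth false w j.+3) => //= _; rewrite /bz /vb /=; nia.
Qed.

Definition Tt (B : nat -> bool) (H : nat -> int) (i : nat) : int :=
  bz (~~ B i && B i.+1) * H i.+1 - bz (~~ B i && B i.-1) * H i.-1.

Lemma telescope_id (B : nat -> bool) (H : nat -> int) (k : nat) :
  \sum_(j < k) Tt B H j.+1 =
  bz (B k.+1) * H k.+1 - bz (B 0) * H 0
  + \sum_(t < k.+1) bz (B t && B t.+1) * (H t - H t.+1)
  + bz (B k && ~~ B k.+1) * H k - bz (B 1 && ~~ B 0) * H 1.
Proof.
elim: k => [|k IH].
  rewrite big_ord0 big_ord1 /bz.
  by case: (B 0); case: (B 1) => /=; ring.
rewrite big_ord_recr /= IH [in RHS]big_ord_recr /= /Tt /=.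
by rewrite /bz; case: (B k); case: (B k.+1); case: (B k.+2) => /=; ring.
Qed.

Lemma Gt_mono w t : wallb w t ->
  Gt w t <= Gt w t.+1.
Proof.
rewrite /wallb /Gt hhS => /eqP ->.
move: (hh w t) => x; case: (nth false w t.+1); rewrite /vb; lia.
Qed.

Lemma bz_ge0 b : 0 <= bz b. Proof. by case: b. Qed.

Lemma drift_case2 w : hh w (size w) = 0 -> (2 < size w)%N ->
  (forall i, (i < (size w).-1)%N -> allowed w i -> sL w i + sR w i = 0) ->
  \sum_(i < (size w).-1) bz (allowed w i) * (Phi4 (flip w i) - Phi4 w + 4) <= 0.
Proof.
move=> hn hs hnd.
have hsz : (size w).-1 = (size w - 3).+2 by lia.
move: hnd; rewrite hsz => hnd.
set k := (size w - 3)%N.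
have hk : size w = k.+3 by rewrite /k; lia.
have a0 : allowed w 0 = false.
  apply/negP => ha; have := hnd 0%N erefl ha.
  rewrite /sL /sR /= (_ : (2 < size w)%N = true) //.
  by rewrite /bz; case: (wallb w 1).
have a1 : allowed w k.+1 = false.
  apply/negP => ha; have := hnd k.+1 (ltnSn _) ha.
  rewrite /sL /sR /= hk ltnn.
  by rewrite /bz; case: (wallb w k).
have f2 : (wallb w 1 && ~~ wallb w 0) = false.
  apply/negP => /andP[b1 b0].
  have hd : nth false w 0 != nth false w 1 by exact: b0.
  have hm := mism_flip (ltnW hs) hd.
  move: hm; rewrite /sL /sR /= (_ : (2 < size w)%N = true) // b1 /bz => hm.
  have : allowed w 0 by rewrite /allowed hd /=; lia.
  by rewrite a0.
have f3 : (wallb w k && ~~ wallb w k.+1) = false.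
  apply/negP => /andP[b1 b0].
  have hd : nth false w k.+1 != nth false w k.+2 by exact: b0.
  have hm := mism_flip (_ : (k.+2 < size w)%N) hd.
  move: hm; rewrite /sL /sR /= hk ltnn b1 /bz => /(_ (ltnSn _)) hm.
  have : allowed w k.+1 by rewrite /allowed hd /=; lia.
  by rewrite a1.
rewrite big_ord_recl big_ord_recr /= a0 /= mul0r add0r.
rewrite (_ : bump 0 k = k.+1) // a1 /= mul0r addr0.
have -> : \sum_(i < k) bz (allowed w (bump 0 i)) * (Phi4 (flip w (bump 0 i)) - Phi4 w + 4)
    = \sum_(j < k) Tt (wallb w) (Ht w) j.+1.
  apply: eq_bigr => j _; rewrite /bump /= add1n.
  have hj := ltn_ord j.
  rewrite case2_flip //; first by rewrite hk; lia.
  by move=> ha; apply: hnd => //; lia.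
rewrite telescope_id f2 f3 /bz /= !mul0r !subr0.
have hB0 : (if wallb w 0 then 1 else 0) * Ht w 0 >= 0.
  case hb: (wallb w 0); last by rewrite mul0r.
  rewrite mul1r /Ht /Gt hh0 /= add0r.
  by case: (nth false w 0); rewrite /vb /=; lia.
have hBk : (if wallb w k.+1 then 1 else 0) * Ht w k.+1 <= 0.
  case hb: (wallb w k.+1); last by rewrite mul0r.
  move/eqP: hb => h1; rewrite mul1r /Ht /Gt.
  move: hn; rewrite hk !hhS -h1 /=.
  move: (hh w k + vb (nth false w k)) => x; case: (nth false w k.+1); rewrite /vb /=; lia.
have hP : \sum_(t < k.+1) (if wallb w t && wallb w t.+1 then 1 else 0) * (Ht w t - Ht w t.+1) <= 0.
  apply: sumr_le0 => t _; case hb: (wallb w t && wallb w t.+1); last by rewrite mul0r.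
  move/andP: hb => [b1 _]; rewrite mul1r /Ht.
  have := Gt_mono b1; move: (Gt w t) (Gt w t.+1) => g1 g2 hg.
  have : ((size w).-1)%:Z * g1 <= ((size w).-1)%:Z * g2 by apply: ler_wpM2l.
  lia.
move: hB0 hBk hP; move: (_ * Ht w 0) (_ * Ht w k.+1) (\sum_(t < k.+1) _) => a b c; lia.
Qed.

Lemma drift_sum w : hh w (size w) = 0 -> (0 < mism w)%N ->
  \sum_(i < (size w).-1) bz (allowed w i) * (Phi4 (flip w i) - Phi4 w + 4) <= 0.
Proof.
move=> hn hE.
have hs2 : (1 < size w)%N.
  move: hE; rewrite /mism; case: (size w) => [|[|n]] //.
have hs3 : (2 < size w)%N.
  case: (ltngtP (size w) 2) => // h2; first by lia.
  move: hE hn; rewrite /mism h2 /= /hh big_ord_recr big_ord1 /=.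
  by case: (nth false w 0); case: (nth false w 1).
set m := (size w).-1.
have hm : (1 < m)%N by rewrite /m; lia.
case: (boolP [exists i : 'I_m, allowed w i && (sL w i + sR w i < 0)]).
  case/existsP => i0 /andP[a0 s0].
  have hb : forall i : 'I_m, bz (allowed w i) * (Phi4 (flip w i) - Phi4 w + 4) <=
      bz (allowed w i) * (4 * (m * (m + 2))%:Z * (sL w i + sR w i)) + bz (allowed w i) * (4 * m%:Z + 4).
    move=> i; case ha: (allowed w i); last by rewrite /bz !mul0r addr0.
    have hi : (i.+1 < size w)%N by have := ltn_ord i; rewrite /m; lia.
    have [_ h] := flip_bound hi ha.
    rewrite (_ : bz true = 1) // !mul1r; move: h; rewrite -/m; lia.
  apply: le_trans (ler_sum _ (fun i _ => hb i)) _.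
  rewrite big_split /=.
  have h1 : \sum_(i < m) bz (allowed w i) * (4 * (m * (m + 2))%:Z * (sL w i + sR w i))
       <= - 4 * (m * (m + 2))%:Z.
    rewrite (bigD1 i0) //= a0 /bz mul1r.
    have hr : \sum_(i < m | i != i0) (if allowed w i then 1 else 0) * (4 * (m * (m + 2))%:Z * (sL w i + sR w i)) <= 0.
      apply: sumr_le0 => i _; case ha: (allowed w i); last by rewrite mul0r.
      have hi : (i.+1 < size w)%N by have := ltn_ord i; rewrite /m; lia.
      have [h _] := flip_bound hi ha.
      rewrite mul1r; apply: mulr_ge0_le0 => //.
    move: hr s0; move: (\sum_(i < m | i != i0) _) (sL w i0 + sR w i0) => a s.
    have : (0 <= (m * (m + 2))%:Z) by [].
    move: ((m * (m + 2))%:Z) => A; nia.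
  have h2 : \sum_(i < m) bz (allowed w i) * (4 * m%:Z + 4) <= \sum_(i < m) (4 * m%:Z + 4).
    apply: ler_sum => i _; rewrite /bz; case: (allowed w i); rewrite ?mul1r ?mul0r //; lia.
  rewrite sumr_const card_ord in h2.
  apply: le_trans (lerD h1 h2) _.
  rewrite -mulr_natr natz; nia.
rewrite negb_exists => /forallP hall.
apply: drift_case2 => // i hi ha.
have hi1 : (i.+1 < size w)%N by rewrite /m in hi; lia.
have [h _] := flip_bound hi1 ha.
have := hall (Ordinal hi); rewrite /= ha /=.
move: h; move: (sL w i + sR w i) => s; lia.
Qed.

Lemma hh_le w k : `|hh w k| <= k%:Z.
Proof.
elim: k => [|k IH]; first by rewrite hh0.
rewrite hhS; move: IH; case: (nth false w k); rewrite /vb; lia.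
Qed.

Lemma Hs_bounds w : 0 <= Hs w <= ((size w).+1 * size w)%:Z.
Proof.
apply/andP; split; first by apply: sumr_ge0 => k _.
apply: le_trans (_ : \sum_(k < (size w).+1) (size w)%:Z <= _).
  apply: ler_sum => k _; apply: le_trans (hh_le w k) _; have := ltn_ord k; lia.
by rewrite sumr_const card_ord -mulr_natr natz; lia.
Qed.

Lemma Qs_bounds w : 0 <= Qs w <= ((size w).-1 * ((size w).-1 * (size w).-1))%:Z.
Proof.
apply/andP; split.
  apply: sumr_ge0 => t _; apply: mulr_ge0; first by case: (wallb _ _).
  by rewrite /q4.
apply: le_trans (_ : \sum_(t < (size w).-1) ((size w).-1 * (size w).-1)%:Z <= _).
  apply: ler_sum => t _; rewrite /bz /q4; case: (wallb w t); rewrite ?mul1r ?mul0r; nia.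
by rewrite sumr_const card_ord -mulr_natr natz; lia.
Qed.

Lemma mism_le w : (mism w <= (size w).-1)%N.
Proof. by rewrite /mism; apply: leq_trans (count_size _ _) _; rewrite size_iota. Qed.

Lemma Phi4_bounds w : 0 <= Phi4 w <= 15 * (size w)%:Z ^+ 3.
Proof.
have := Hs_bounds w; have := Qs_bounds w; have := mism_le w.
rewrite /Phi4; move: (Hs w) (Qs w) (mism w) (size w) => H Q E [|n] /=.
  by move=> _ /andP[h1 h2] /andP[h3 h4]; rewrite !mul0r !add0r; lia.
move=> hE /andP[h1 h2] /andP[h3 h4]; rewrite !exprS expr0 mulr1.
apply/andP; split; nia.
Qed.

Lemma Phi4_ge4 w : (0 < mism w)%N -> 4 <= Phi4 w.
Proof.
move=> hE; have := Hs_bounds w; have := Qs_bounds w; have := mism_le w.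
rewrite /Phi4; move: (Hs w) (Qs w) hE; move: (mism w) (size w) => E n H Q hE.
move=> hm /andP[h1 h2] /andP[h3 h4]; nia.
Qed.

Lemma hh_flip_end w i : (i.+1 < size w)%N ->
  hh (flip w i) (size (flip w i)) = hh w (size w).
Proof.
move=> hs; rewrite size_flip // hh_flip.
by rewrite (_ : (size w == i.+1) = false) ?addr0 //; lia.
Qed.

Lemma hh_cons x s k : hh (x :: s) k.+1 = vb x + hh s k.
Proof. by rewrite /hh big_ord_recl. Qed.

Lemma hh_count w : hh w (size w) = (count id w)%:Z - (count negb w)%:Z.
Proof.
elim: w => [|x s IH]; first by rewrite hh0.
rewrite /= hh_cons IH; case: x => /=; rewrite /vb; lia.
Qed.

Lemma config_hh n w : config n w -> hh w (size w) = 0.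
Proof. by case/andP=> _ /eqP hc; rewrite hh_count hc subrr. Qed.

Lemma drift_card w : hh w (size w) = 0 -> (0 < mism w)%N ->
  \sum_(i < (size w).-1 | allowed w i) Phi4 (flip w i)
   <= (#|[pred i : 'I_(size w).-1 | allowed w i]|)%:Z * (Phi4 w - 4).
Proof.
move=> hn hE; have := drift_sum hn hE.
have hK : \sum_(i < (size w).-1 | allowed w i) (1 : int) = (#|[pred i : 'I_(size w).-1 | allowed w i]|)%:Z.
  by rewrite sumr_const -natz.
rewrite -hK mulr_suml mul1r.
have -> : \sum_(i < (size w).-1) bz (allowed w i) * (Phi4 (flip w i) - Phi4 w + 4)
   = \sum_(i < (size w).-1 | allowed w i) Phi4 (flip w i) - \sum_(i < (size w).-1 | allowed w i) (Phi4 w - 4).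
  rewrite -sumrB [in RHS]big_mkcond /=; apply: eq_bigr => i _; rewrite /bz; case: (allowed w i) => /=; ring.
by rewrite subr_le0.
Qed.

End Comb.

Section Prob.
Variable R : realType.
Local Open Scope ring_scope.

Definition Phi (w : seq bool) : R := (Phi4 w)%:~R / 4.

Lemma Phi_ge0 w : 0 <= Phi w.
Proof.
have /andP[h _] := Phi4_bounds w.
by rewrite /Phi; apply: divr_ge0; [rewrite ler0z | ].
Qed.

Lemma Phi_ge1 w : (0 < mism w)%N -> 1 <= Phi w.
Proof.
move=> hE; have h := Phi4_ge4 hE.
have : (4 : R) <= (Phi4 w)%:~R by rewrite (_ : (4 : R) = (4 : int)%:~R) // ler_int.
rewrite /Phi => h'; lra.
Qed.

Lemma surv_ge0 t w : 0 <= surv R t w.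
Proof.
elim: t w => [|t IH] w /=; first by case: ifP.
case: ifP => // _; apply: divr_ge0; last exact: ler0n.
by apply: sumr_ge0 => i _; exact: IH.
Qed.

Lemma drift_R w : hh w (size w) = 0 -> (0 < mism w)%N ->
  \sum_(i < (size w).-1 | allowed w i) Phi (flip w i)
   <= (#|[pred i : 'I_(size w).-1 | allowed w i]|)%:R * (Phi w - 1).
Proof.
move=> hn hE; have := drift_card hn hE.
rewrite -(ler_int R) rmorph_sum /= rmorphM rmorphB /=.
move: (#|_|) => K.
rewrite /Phi -mulr_suml.
move: (\sum_(i < _ | _) _) => S.
rewrite (_ : (K%:Z)%:~R = K%:R :> R) //.
move: (K%:R : R) (ler0n R K) => k hk h.
have -> : k * ((Phi4 w)%:~R / 4 - 1) = (k * ((Phi4 w)%:~R - (4 : int)%:~R)) / 4 by rewrite /=; field.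
by apply: ler_wpM2r => //; rewrite invr_ge0.
Qed.

Lemma partial t w : hh w (size w) = 0 -> \sum_(s < t.+1) surv R s w <= Phi w.
Proof.
elim: t w => [|t IH] w hn.
  by rewrite big_ord1 /=; case: ifP => h; [exact: Phi_ge1 | exact: Phi_ge0].
rewrite big_ord_recl.
rewrite (eq_bigr (fun i : 'I_t.+1 => surv R i.+1 w)); last by move=> i _; rewrite lift0.
rewrite /=.
case: ifP => hE; last first.
  by rewrite big1_eq add0r; exact: Phi_ge0.
rewrite -mulr_suml exchange_big /=.
set K := (#|_|)%:R.
have hK : 0 <= K by exact: ler0n.
have h1 : \sum_(j < (size w).-1 | allowed w j) \sum_(i < t.+1) surv R i (flip w j)
     <= K * (Phi w - 1).
  apply: le_trans (drift_R hn hE).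
  apply: ler_sum => j ha; apply: IH.
  by rewrite hh_flip_end //; have := ltn_ord j; lia.
have hP1 := Phi_ge1 hE.
case: (eqVneq K 0) => hK0.
  by rewrite hK0 invr0 mulr0; lra.
have : (\sum_(j < (size w).-1 | allowed w j) \sum_(i < t.+1) surv R i (flip w j)) / K <= Phi w - 1.
  rewrite ler_pdivrMr; last by rewrite lt_def hK0 hK.
  by rewrite mulrC.
lra.
Qed.

Lemma expT_le w : hh w (size w) = 0 -> (expT R w <= (Phi w)%:E)%E.
Proof.
move=> hn; rewrite /expT.
apply: lime_le.
  by apply: is_cvg_nneseries => n _ _; rewrite lee_fin; exact: surv_ge0.
apply: nearW => n; rewrite sumEFin lee_fin.
case: n => [|t]; first by rewrite big_geq //; exact: Phi_ge0.
by rewrite big_mkord; exact: partial.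
Qed.

Lemma Phi_le w : Phi w <= 4 * (size w)%:R ^+ 3.
Proof.
have /andP[_ h] := Phi4_bounds w.
have : (Phi4 w)%:~R <= ((15 * (size w)%:Z ^+ 3 : int))%:~R :> R by rewrite ler_int.
rewrite rmorphM rmorphXn /= (_ : ((size w)%:Z)%:~R = (size w)%:R :> R) //.
have h3 : 0 <= (size w)%:R ^+ 3 :> R by apply: exprn_ge0; exact: ler0n.
move: ((size w)%:R ^+ 3 : R) h3 => x hx.
rewrite /Phi; lra.
Qed.

End Prob.
Unset Implicit Arguments. Set Strict Implicit.

Theorem theorem1 (R : realType) :
  exists (C : R) (N : nat), forall (n : nat) (w : seq bool),
    (N <= n)%N -> config n w ->
    (expT R w <= (C * (n%:R) ^+ 3)%:E)%E.
Proof.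
exists 4%R, 0%N => n w _ hc.
have hn := config_hh hc.
have /andP[/eqP hs _] := hc.
apply: le_trans (expT_le R hn) _.
by rewrite lee_fin -hs; exact: Phi_le.
Qed.
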